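(* There exist absolute constants $c_1$, $c_2$ and $c_3$ for which the following holds. Let $v \in \mathbb{R}^N$ and suppose there are $A,B>0$ and $1 \leq \alpha \leq 2$ such that for every $I \subset \{1,\dots,N\}$, $$ \Big(\sum_{i \in I} v_i^2 \Big)^{1/2} \leq A + B \sqrt{|I|}\log^{1/\alpha}\left(eN/|I|\right). $$ If $\beta \geq c_1B\max\{ \log^{1/\alpha}(c_2NB^2/A^2),1\}$ and $E_\beta = \{i: |v_i| \geq \beta \}$, then $$ |E_\beta| \leq \max \left\{ \frac{4A^2}{\beta^2}, eN \exp(-(\beta/2B)^{\alpha})\right\} \quad \text{and} \quad \Big(\sum_{i \in E_\beta} v_i^2\Big)^{1/2} \leq c_3 A. $$ *)

(* Defs.v *)
From HB Require Import structures.
From mathcomp Require Import all_boot all_order all_algebra.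
From mathcomp Require Import all_classical all_reals all_analysis.
Set Implicit Arguments. Unset Strict Implicit. Unset Printing Implicit Defensive.

(* Main.v *)
From HB Require Import structures.
From mathcomp Require Import all_boot all_order all_algebra.
From mathcomp Require Import all_classical all_reals all_analysis.
From mathcomp Require Import ring lra.
Require Import Defs.
Import Order.TTheory GRing.Theory Num.Theory.
Local Open Scope ring_scope.

Lemma e_le4 (R : realType) : expR 1 <= 4 :> R.
Proof.
have h : 1 - 2^-1 <= expR (- 2^-1) :> R by exact: expR_ge1Dx.
have e2 : expR (1:R) = expR (2^-1) * expR (2^-1).
  by rewrite -expRD; congr expR; field.
have p : 0 < expR (2^-1 : R) := expR_gt0 _.
rewrite expRN in h.
have hv : expR (2^-1 : R) * (expR (2^-1))^-1 = 1 by rewrite mulfV // gt_eqF.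
have : expR (2^-1 : R) <= 2 by nra.
rewrite e2 => q. nra.
Qed.

Lemma L_le (R : realType) (L : R) : 0 <= L -> L ^+ 2 <= 16 * expR (L / 2).
Proof.
move=> L0.
have h : 1 + L / 4 <= expR (L / 4) := expR_ge1Dx _.
have e2 : expR (L / 2) = expR (L/4) * expR (L/4) by rewrite -expRD; congr expR; field.
rewrite e2. nra.
Qed.

Theorem lemma4p2 (R : realType) :
  exists c1 c2 c3 : R, 0 < c1 /\ 0 < c2 /\ 0 < c3 /\
  forall (N : nat) (v : 'I_N -> R) (A B alpha beta : R),
    0 < A -> 0 < B -> 1 <= alpha -> alpha <= 2 ->
    (forall I : {set 'I_N},
        Num.sqrt (\sum_(i in I) v i ^+ 2)
          <= A + B * Num.sqrt (#|I|%:R)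
                   * powR (ln (expR 1 * N%:R / #|I|%:R)) alpha^-1) ->
    c1 * B * Num.max (powR (Num.max (ln (c2 * N%:R * B ^+ 2 / A ^+ 2)) 0) alpha^-1) 1
      <= beta ->
    #|[set i | beta <= `|v i| ]|%:R
      <= Num.max (4 * A ^+ 2 / beta ^+ 2)
                 (expR 1 * N%:R * expR (- powR (beta / (2 * B)) alpha))
    /\ Num.sqrt (\sum_(i in [set i | beta <= `|v i| ]) v i ^+ 2) <= c3 * A.
Proof.
exists 8, 1, 9; split; [lra|split; [lra|split; [lra|]]].
move=> N v A B al be A0 B0 al1 al2 hyp hbe.
set E := [set i | be <= `|v i| ].
set k := #|E|.
set M := 1 * N%:R * B ^+ 2 / A ^+ 2.
set m := Num.max (ln M) 0.
set Q := Num.max (powR m al^-1) 1.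
have Q1 : 1 <= Q by rewrite le_max lexx orbT.
have {}hbe : 8 * B * Q <= be by exact: hbe.
have be0 : 0 < be.
  have hq : 0 <= Q - 1 by rewrite subr_ge0.
  have := mulr_ge0 (ltW B0) hq; nra.
have al0 : 0 < al by lra.
have hS : k%:R * be ^+ 2 <= \sum_(i in E) v i ^+ 2.
  rewrite mulr_natl -sumr_const; apply: ler_sum => i; rewrite inE => hi.
  rewrite -(real_normK (num_real (v i))).
  have := normr_ge0 (v i); nra.
have hyE := hyp E.
have [k0|kpos] := eqVneq k 0%N.
  rewrite (cards0_eq k0) big_set0 sqrtr0 k0; split; last by nra.
  rewrite le_max; apply/orP; left; apply: divr_ge0; nra.
have kN : (k <= N)%N by rewrite /k; apply: leq_trans (max_card E) _; rewrite card_ord.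
have kR : 1 <= k%:R :> R by rewrite ler1n lt0n.
have kNR : k%:R <= N%:R :> R by rewrite ler_nat.
set y : R := expR 1 * N%:R / k%:R.
have e0 : 0 < expR 1 :> R := expR_gt0 _.
have ey : expR 1 <= y.
  rewrite /y ler_pdivlMr; last lra.
  nra.
have ypos : 0 < y by lra.
set L := ln y.
have L1 : 1 <= L.
  have : ln (expR 1) <= ln y by rewrite ler_ln ?posrE.
  by rewrite expRK.
have eL : expR L = y by rewrite /L lnK // posrE.
set P := powR L al^-1.
set s : R := Num.sqrt k%:R.
set T := Num.sqrt (\sum_(i in E) v i ^+ 2).
have s0 : 0 < s by rewrite sqrtr_gt0; lra.
have ss : s ^+ 2 = k%:R by rewrite sqr_sqrtr //; lra.
have hsb : s * be <= T.
  have -> : s * be = Num.sqrt (k%:R * be ^+ 2).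
    by rewrite sqrtrM ?ler0n // sqrtr_sqr ger0_norm // ltW.
  exact: ler_wsqrtr.
have T0 : 0 <= T := sqrtr_ge0 _.
have P0 : 0 <= P := powR_ge0 _ _.
have ali : al^-1 <= 1 by rewrite invf_le1.
have PL : P <= L by apply: ler1_powR.
have {}hyE : T <= A + B * s * P by exact: hyE.
case: (leP (2 * B * P) be) => hc.
  have h1 := ler_wpM2l (ltW s0) hc.
  have sb : s * be <= 2 * A by nra.
  split; last by nra.
  rewrite le_max; apply/orP; left.
  rewrite ler_pdivlMr; last by nra.
  nra.
have t_lt : powR (be / (2 * B)) al < L.
  have : be / (2 * B) < P by rewrite ltr_pdivrMr; nra.
  move=> /(gt0_ltr_powR al0); rewrite !nnegrE => /(_ _ P0).
  rewrite -powRrM mulVf ?gt_eqF // powRr1; last lra.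
  apply; apply: divr_ge0; lra.
have kE : k%:R = expR 1 * N%:R * expR (- L).
  rewrite expRN eL /y; field.
  apply/andP; split; rewrite gt_eqF //; lra.
split.
  rewrite le_max; apply/orP; right.
  rewrite kE ler_pM2l; last nra.
  rewrite ler_expR; lra.
have M0 : 0 < M by rewrite /M; apply: divr_gt0; nra.
have hLM : ln M <= L / 2.
  rewrite leNgt; apply/negP => h.
  have mE : m = ln M by rewrite /m max_l //; lra.
  have m0 : 0 <= m by rewrite mE; lra.
  have P2 : P <= powR (2 * m) al^-1.
    apply: ge0_ler_powR; rewrite ?nnegrE; try lra.
    by rewrite invr_ge0; lra.
  rewrite powRM in P2; try lra.
  have h2 : powR 2 al^-1 <= 2 by apply: ler1_powR; lra.
  have hq : powR m al^-1 <= Q by rewrite le_max lexx.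
  have pm0 := powR_ge0 m al^-1.
  have P3 : P <= 2 * Q by nra.
  have P4 : B * P <= B * (2 * Q) by apply: ler_wpM2l; lra.
  nra.
have hM : M <= expR (L / 2).
  by rewrite -[leLHS](lnK (x := M)) ?posrE // ler_expR.
set X := expR (L / 2).
have X0 : 0 < X := expR_gt0 _.
have hXX : expR (- L) * X * X = 1.
  rewrite /X -!expRD.
  have -> : - L + L / 2 + L / 2 = 0 by field.
  exact: expR0.
have hL2 : L ^+ 2 <= 16 * X by apply: L_le; lra.
have MA : M * A ^+ 2 = N%:R * B ^+ 2.
  rewrite /M; field; rewrite gt_eqF //; lra.
have eN0 : 0 <= expR 1 * N%:R * expR (- L) by rewrite -kE; lra.
have k1 : k%:R * L ^+ 2 * X <= 16 * expR 1 * N%:R.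
  rewrite kE.
  have := ler_wpM2l eN0 hL2.
  have eq1 : expR 1 * N%:R * expR (- L) * (16 * X) * X = 16 * expR 1 * N%:R.
    have -> : expR 1 * N%:R * expR (- L) * (16 * X) * X =
      16 * expR 1 * N%:R * (expR (- L) * X * X) by ring.
    by rewrite hXX mulr1.
  move=> h; rewrite -eq1; apply: ler_wpM2r; lra.
have k2 : B ^+ 2 * (k%:R * L ^+ 2) * X <= 16 * expR 1 * (X * A ^+ 2).
  have h3 := ler_wpM2l (sqr_ge0 B) k1.
  have h4 : N%:R * B ^+ 2 <= X * A ^+ 2.
    rewrite -MA; apply: ler_wpM2r => //; exact: sqr_ge0.
  have := ler_wpM2l (ltW (mulr_gt0 (ltr0Sn _ 15) e0)) h4.
  have -> : B ^+ 2 * (k%:R * L ^+ 2) * X = B ^+ 2 * (k%:R * L ^+ 2 * X) by ring.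
  move=> h5.
  apply: le_trans h3 _.
  have -> : B ^+ 2 * (16 * expR 1 * N%:R) = 16 * expR 1 * (N%:R * B ^+ 2) by ring.
  exact: h5.
have k3 : B ^+ 2 * (k%:R * L ^+ 2) <= 64 * A ^+ 2.
  have e4 := e_le4 R.
  have k2' : B ^+ 2 * (k%:R * L ^+ 2) * X <= 64 * A ^+ 2 * X.
    apply: le_trans k2 _.
    have := mulr_ge0 (ltW X0) (sqr_ge0 A); nra.
  by rewrite ler_pM2r in k2'.
have k4 : B * s * L <= 8 * A.
  have hsq : (B * s * L) ^+ 2 <= (8 * A) ^+ 2.
    have -> : (B * s * L) ^+ 2 = B ^+ 2 * (k%:R * L ^+ 2) by rewrite -ss; ring.
    have -> : (8 * A) ^+ 2 = 64 * A ^+ 2 by ring.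
    exact: k3.
  rewrite -(ler_pXn2r (n := 2)) // ?nnegrE; last lra.
  apply: mulr_ge0; [apply: mulr_ge0|]; lra.
have k5 : B * s * P <= B * s * L by apply: ler_wpM2l => //; apply: mulr_ge0; lra.
lra.
Qed.
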